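(* Let $N\equiv 2\pmod 4$, $q=e^{2\pi i/N}$, $\rho=\sum_{j=1}^n(n-j+\tfrac12)\epsilon_j$, and let $W$ be the group of signed permutations of $\epsilon_1,\dots,\epsilon_n$ (the Weyl group of $osp(1|2n)$) and $\epsilon':W\to\{\pm1\}$ any function. Set $c=\big(\sum_{\lambda\in(\mathbb{Z}/N\mathbb{Z})^n}q^{(\lambda,\lambda+2\rho)}\big)^{-1}$ (well defined by nonvanishing of this sum) and $x_\lambda=c\,q^{-(\lambda,2\rho)}$. For $\lambda,\mu\in\mathbb{Z}^n$ define $$S'_{\lambda,\mu}=\sum_{\sigma\in W}\epsilon'(\sigma)\,q^{2(\lambda+\rho,\sigma(\mu+\rho))},\qquad Q_\mu=\sum_{\sigma\in W}\epsilon'(\sigma)\,q^{2(\rho,\sigma(\mu+\rho))}.$$ Then for every $\mu\in\mathbb{Z}^n$, $$\sum_{\lambda\in(\mathbb{Z}/N\mathbb{Z})^n}x_\lambda\,q^{(\lambda,\lambda+2\rho)}\,S'_{\lambda,\mu}=Q_\mu\,q^{-(\mu,\mu+2\rho)},$$ where the summand is independent of the choice of representative of $\lambda$ modulo $N$.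
   Context: $(\cdot,\cdot)$ is the standard inner product with orthonormal basis $\epsilon_1,\dots,\epsilon_n$. $W$ acts on $\mathbb{R}^n$ by permuting coordinates and changing their signs. $\rho$ is the Weyl vector of $osp(1|2n)$: half the sum of the even positive roots $\epsilon_i\pm\epsilon_j$ $(i<j)$, $2\epsilon_k$, minus half the sum of the odd positive roots $\epsilon_k$. *)

(* Defs.v *)
From mathcomp Require Import all_boot all_order all_algebra all_fingroup all_field.
Set Implicit Arguments. Unset Strict Implicit. Unset Printing Implicit Defensive.
Import Order.TTheory GRing.Theory Num.Theory.
Local Open Scope ring_scope.

(* Vectors of Q^n (containing Z^n and the half-integral rho), coordinates
   w.r.t. the orthonormal basis eps_1..eps_n, indexed by 'I_n (i <-> eps_{i+1}). *)
Definition qvec (n : nat) := 'I_n -> rat.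

Definition dot (n : nat) (u v : qvec n) : rat := \sum_(i < n) u i * v i.

Definition vadd (n : nat) (u v : qvec n) : qvec n := fun i => u i + v i.
Definition vscale (n : nat) (a : rat) (u : qvec n) : qvec n := fun i => a * u i.

Definition ivec (n : nat) (l : 'I_n -> int) : qvec n := fun i => (l i)%:~R.

Definition repr_mod (n N : nat) (l : {ffun 'I_n -> 'I_N}) : qvec n :=
  fun i => (nat_of_ord (l i))%:R.

(* rho = sum_{j=1}^n (n - j + 1/2) eps_j ; coordinate i : 'I_n is j = i+1 *)
Definition rho (n : nat) : qvec n :=
  fun i => (n%:R - (i.+1)%:R + 1 / 2%:R).
Arguments rho n : clear implicits.

(* W = signed permutations of eps_1..eps_n: a permutation s together with a
   sign pattern e; (g v)_i = (-1)^(e i) v_(s i). Each pair gives a distinct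
   signed permutation and all arise, so this type is in bijection with W. *)
Definition signed_perm (n : nat) := ({perm 'I_n} * {ffun 'I_n -> bool})%type.

Definition act (n : nat) (g : signed_perm n) (v : qvec n) : qvec n :=
  fun i => (-1) ^+ (g.2 i) * v (g.1 i).

(* zeta = e^{2 pi i/(4N)} = e^{i pi/(2N)}: the (2N)-th root of -1 with minimal
   nonnegative argument (algC's n.-root). q = zeta^4 = e^{2 pi i/N}. *)
Definition zeta (N : nat) : algC := (2 * N)%N.-root (-1).
Definition q (N : nat) : algC := zeta N ^+ 4.

(* q^x for x in (1/4)Z (all exponents occurring below are in (1/2)Z):
   q^x = e^{2 pi i x/N} = zeta^(4x). *)
Definition qpow (N : nat) (x : rat) : algC := zeta N ^ (Num.floor (4%:R * x)).

Definition Gsum (n N : nat) : algC :=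
  \sum_(l : {ffun 'I_n -> 'I_N})
     qpow N (dot (repr_mod l) (vadd (repr_mod l) (vscale 2%:R (rho n)))).

Definition cconst (n N : nat) : algC := (Gsum n N)^-1.

Definition xcoef (n N : nat) (l : qvec n) : algC :=
  cconst n N * qpow N (- dot l (vscale 2%:R (rho n))).

Definition Sprime (n N : nat) (eps' : signed_perm n -> algC) (l m : qvec n) : algC :=
  \sum_(g : signed_perm n)
     eps' g * qpow N (2%:R * dot (vadd l (rho n)) (act g (vadd m (rho n)))).

Definition Qmu (n N : nat) (eps' : signed_perm n -> algC) (m : qvec n) : algC :=
  \sum_(g : signed_perm n)
     eps' g * qpow N (2%:R * dot (rho n) (act g (vadd m (rho n)))).

Arguments Sprime n N eps' l m : clear implicits.
Arguments Qmu n N eps' m : clear implicits.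
Arguments xcoef n N l : clear implicits.

(* Main.v *)
Require Import Defs.
From mathcomp Require Import all_boot all_order all_algebra all_fingroup all_field.
From mathcomp Require Import ring lra zify.
Import Order.TTheory GRing.Theory Num.Theory.
Local Open Scope ring_scope.

Section Q.
Variable N : nat.
Hypothesis N0 : (0 < N)%N.

Lemma zeta4N : zeta N ^+ (4 * N) = 1.
Proof.
have h : zeta N ^+ (2 * N) = -1 by rewrite /zeta rootCK // muln_gt0.
have e : (4 * N = 2 * N * 2)%N by rewrite mulnAC.
by rewrite e exprM h sqrrN expr1n.
Qed.

Lemma zeta_neq0 : zeta N != 0.
Proof.
apply/negP => /eqP h; have := zeta4N; rewrite h expr0n.
rewrite muln_eq0 /= -[N == 0%N]negbK -lt0n N0 /= => /eqP; by rewrite eq_sym oner_eq0.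
Qed.

Lemma qpowD a b : (4%:R * a) \is a Num.int -> qpow N (a + b) = qpow N a * qpow N b.
Proof.
move=> ha; rewrite /qpow mulrDr floorDzr // expfzDr //; exact: zeta_neq0.
Qed.

Lemma qpow_per x k : k \is a Num.int -> qpow N (x + N%:R * k) = qpow N x.
Proof.
move=> hk; rewrite /qpow mulrDr addrC floorDzr; last first.
  by rewrite rpredM ?rpredM ?natr_int.
rewrite expfzDr ?zeta_neq0 //.
move/intrP: hk => [m ->].
have -> : 4%:R * (N%:R * m%:~R) = ((4 * N)%N%:Z * m)%:~R :> rat.
  by rewrite intrM -pmulrn natrM mulrA.
rewrite intrKfloor -exprz_exp.
by rewrite -exprnP zeta4N exp1rz mul1r.
Qed.

Lemma qpow0 : qpow N 0 = 1.
Proof. by rewrite /qpow mulr0 floor0 expr0z. Qed.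

Lemma per_sum (h : int -> algC) : (forall x, h (x + N%:Z) = h x) ->
  forall k, \sum_(x < N) h (x%:Z + k) = \sum_(x < N) h x%:Z.
Proof.
move=> hp.
have step : forall k, \sum_(x < N) h (x%:Z + (k + 1)) = \sum_(x < N) h (x%:Z + k).
  move=> k; case: N N0 hp => // M _ hp.
  rewrite big_ord_recr big_ord_recl /=.
  rewrite (_ : M%:Z + (k + 1) = k + M.+1%:Z); last by rewrite -addn1 PoszD; ring.
  rewrite hp add0r [h k + _]addrC; apply: congr2 => //; apply: eq_bigr => i _.
  by congr h; rewrite /bump /= add1n -addn1 PoszD; ring.
have stepn : forall k (m : nat), \sum_(x < N) h (x%:Z + (k + m%:Z)) = \sum_(x < N) h (x%:Z + k).
  move=> k; elim=> [|m IH]; first by rewrite addr0.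
  by rewrite -addn1 PoszD addrA step IH.
move=> k; case: k => m.
  by have := stepn 0 m; rewrite add0r => ->; apply: eq_bigr => i _; rewrite addr0.
have := stepn (Negz m) m.+1.
by rewrite NegzE addNr => <-; apply: eq_bigr => i _; rewrite addr0.
Qed.

Lemma qpow_sum (I : finType) (F : I -> rat) :
  (forall i, (4%:R * F i) \is a Num.int) ->
  qpow N (\sum_i F i) = \prod_i qpow N (F i).
Proof.
move=> hF.
pose K x y := (4%:R * x \is a Num.int) /\ qpow N x = y.
suff [] : K (\sum_i F i) (\prod_i qpow N (F i)) by [].
apply: big_rec2; first by split; [rewrite mulr0 rpred0 | exact: qpow0].
move=> i x y _ [hx <-]; split; first by rewrite mulrDr rpredD.
exact: qpowD.
Qed.

Lemma qpowX (a : rat) k : (4%:R * a) \is a Num.int -> qpow N (a * k%:R) = qpow N a ^+ k.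
Proof.
move=> ha; elim: k => [|k IH]; first by rewrite mulr0 qpow0 expr0.
by rewrite -addn1 natrD mulrDr mulr1 addrC qpowD // IH exprD expr1 mulrC.
Qed.

Lemma qpowN (a : rat) : (4%:R * a) \is a Num.int -> qpow N (- a) * qpow N a = 1.
Proof.
by move=> ha; rewrite -qpowD ?addNr ?qpow0 // mulrN rpredN.
Qed.

Lemma int4sq (y : rat) : (2%:R * y) \is a Num.int -> (4%:R * y ^+ 2) \is a Num.int.
Proof.
move=> h; rewrite (_ : 4%:R * y ^+ 2 = (2%:R * y) ^+ 2); first exact: rpredX.
by rewrite exprMn -natrX.
Qed.

Lemma intrZ (m : nat) : (m%:Z)%:~R = m%:R :> rat.
Proof. by rewrite -pmulrn. Qed.

Lemma Sshift (a k : rat) : (2%:R * a) \is a Num.int -> k \is a Num.int ->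
  \sum_(x < N) qpow N ((x%:R + (a + k)) ^+ 2) = \sum_(x < N) qpow N ((x%:R + a) ^+ 2).
Proof.
move=> ha /intrP [m ->].
pose h (y : int) := qpow N ((y%:~R + a) ^+ 2).
have hp : forall y, h (y + N%:Z) = h y.
  move=> y; rewrite /h.
  rewrite (_ : ((y + N%:Z)%:~R + a) ^+ 2 = (y%:~R + a) ^+ 2 + N%:R * (2%:R * (y%:~R + a) + N%:R)).
    apply: qpow_per; rewrite rpredD ?natr_int // mulrDr rpredD // rpredM ?natr_int ?intr_int //.
  by rewrite intrD intrZ; ring.
transitivity (\sum_(x < N) h (x%:Z + m)).
  by apply: eq_bigr => i _; rewrite /h; congr qpow; rewrite intrD intrZ; ring.
rewrite (@per_sum h hp m); apply: eq_bigr => i _; by rewrite /h intrZ.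
Qed.

Lemma shift1 (a b D : rat) : (2%:R * a) \is a Num.int -> (a - b) \is a Num.int ->
  \sum_(x < N) qpow N (x%:R ^+ 2 + 2%:R * x%:R * a + D)
  = qpow N (D - a ^+ 2 + b ^+ 2) * \sum_(x < N) qpow N (x%:R ^+ 2 + 2%:R * x%:R * b).
Proof.
move=> ha hab.
have hb : (2%:R * b) \is a Num.int.
  have e : 2%:R * b = 2%:R * a - 2%:R * (a - b) by ring.
  by rewrite e rpredB // rpredM // natr_int.
have ex : forall c E (x : nat), (2%:R * c) \is a Num.int ->
    qpow N (x%:R ^+ 2 + 2%:R * x%:R * c + E) = qpow N ((x%:R + c) ^+ 2) * qpow N (E - c ^+ 2).
  move=> c E x hc; rewrite -qpowD; first by congr qpow; ring.
  by apply: int4sq; rewrite mulrDr rpredD // rpredM // natr_int.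
under eq_bigr do rewrite ex //.
under [X in _ = _ * X]eq_bigr do rewrite -[_ + 2%:R * _ * b]addr0 (ex b 0) //.
rewrite -!mulr_suml.
have eS := @Sshift b (a - b) hb hab; rewrite (_ : b + (a - b) = a) in eS; last by ring.
rewrite eS mulrCA; congr (_ * _).
rewrite mulrC -qpowD; first by congr qpow; ring.
by rewrite add0r mulrN rpredN int4sq.
Qed.

Lemma int_nat4 (m : nat) : (4%:R * m%:R : rat) \is a Num.int.
Proof. by rewrite rpredM ?natr_int. Qed.

Lemma qpow_nat_per (m : nat) : qpow N (N%:R * m%:R) = 1.
Proof. by rewrite -[_ * _]add0r qpow_per ?natr_int ?qpow0. Qed.

Lemma geom (w : algC) : w ^+ N = 1 ->
  \sum_(y < N) w ^+ y = if w == 1 then N%:R else 0.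
Proof.
move=> wN; case: eqP => [->|/eqP w1].
  by rewrite (eq_bigr (fun _ => 1)) ?sumr_const ?card_ord // => i _; rewrite expr1n.
have := subrX1 w N; rewrite wN subrr => /esym/eqP; rewrite mulf_eq0 subr_eq0.
by rewrite (negbTE w1) => /eqP.
Qed.

Lemma gauss_neq0 (b : nat) : odd b -> (N %% 4 = 2)%N ->
  \sum_(x < N) qpow N (x%:R * (x%:R + b%:R)) != 0.
Proof.
move=> ob hN.
pose f (x : rat) := x * (x + b%:R).
have fint : forall x : nat, (4%:R * f x%:R) \is a Num.int.
  by move=> x; rewrite /f -natrD -natrM int_nat4.
pose M := (N %/ 4).*2.+1.
have NM : N = (2 * M)%N.
  by rewrite {1}(divn_eq N 4) hN /M -mul2n; lia.
have claim : forall x : nat, qpow N (2%:R * x%:R) = 1 -> qpow N (f x%:R) = 1.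
  move=> x w1; case: (boolP (odd x)) => ox.
    have e : f x%:R = (2%:R * x%:R) * ((x + b)./2)%:R.
      have hxb : (x + b)%N = (2 * (x + b)./2)%N.
        by rewrite mul2n -[LHS]odd_double_half oddD ox ob.
        by rewrite /f -natrD {1}hxb natrM; ring.
    by rewrite e qpowX ?w1 ?expr1n // -natrM int_nat4.
  have hx2 : qpow N x%:R ^+ 2 = 1 by rewrite -qpowX ?int_nat4 // -natrM mulnC natrM.
  have hxM : qpow N x%:R ^+ M = 1.
    rewrite -qpowX ?int_nat4 //.
    rewrite -[x](odd_double_half x) (negbTE ox) add0n.
    have -> : (x./2).*2%:R * M%:R = N%:R * (x./2)%:R :> rat.
      by rewrite -!natrM NM; congr (_%:R); lia.
    exact: qpow_nat_per.
  have hx1 : qpow N x%:R = 1.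
    by move: hxM; rewrite /M -addn1 exprD -mul2n exprM hx2 expr1n mul1r expr1.
  by rewrite /f -natrD qpowX ?int_nat4 // hx1 expr1n.
set g := \sum_(x < N) _.
pose g' := \sum_(y < N) qpow N (- f y%:R).
suff : g * g' != 0 by rewrite mulf_eq0 negb_or => /andP [].
have e1 : g * g' = \sum_(y < N) \sum_(x < N) qpow N (f x%:R - f y%:R).
  rewrite /g /g' mulr_suml exchange_big /=; apply: eq_bigr => y _.
  rewrite mulr_sumr; apply: eq_bigr => x _; rewrite qpowD //.
have e2 : forall y : nat, \sum_(x < N) qpow N (f x%:R - f y%:R)
    = \sum_(x < N) qpow N (f x%:R) * qpow N (2%:R * x%:R) ^+ y.
  move=> y.
  pose h (z : int) := qpow N (f z%:~R - f y%:R).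
  have hp : forall z, h (z + N%:Z) = h z.
    move=> z; rewrite /h.
    rewrite (_ : f (z + N%:Z)%:~R - f y%:R = f z%:~R - f y%:R + N%:R * (2%:R * z%:~R + N%:R + b%:R)).
      by apply: qpow_per; rewrite !rpredD ?rpredM ?natr_int ?intr_int.
    by rewrite /f intrD intrZ; ring.
  transitivity (\sum_(x < N) h x%:Z); first by apply: eq_bigr => i _; rewrite /h intrZ.
  rewrite -(@per_sum h hp y); apply: eq_bigr => x _; rewrite /h.
  rewrite -qpowX; last by rewrite !rpredM ?natr_int.
  rewrite -qpowD // intrD !intrZ; congr qpow; rewrite /f; ring.
have e3 : g * g' = \sum_(x < N) (if qpow N (2%:R * x%:R) == 1 then N%:R else 0).
  rewrite e1; under eq_bigr => y _ do rewrite e2.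
  rewrite exchange_big /=; apply: eq_bigr => x _.
  rewrite -mulr_sumr geom.
    by case: eqP => [/claim ->|]; rewrite ?mul1r ?mulr0.
  by rewrite -qpowX ?(rpredM, natr_int) // mulrC -natrM qpow_nat_per.
rewrite e3.
have -> : \sum_(x < N) (if qpow N (2%:R * x%:R) == 1 then N%:R else 0 : algC)
    = (\sum_(x < N) (if qpow N (2%:R * x%:R) == (1 : algC)%R then N else 0))%:R.
  by rewrite natr_sum; apply: eq_bigr => x _; case: ifP.
rewrite pnatr_eq0 -lt0n.
case: N N0 {g g' e1 e2 e3 claim} => // N' _.
by rewrite big_ord_recl /= mulr0 /qpow mulr0 floor0 expr0z eqxx.
Qed.
End Q.

Definition Hh (y : rat) := (y - 2%:R^-1) \is a Num.int.

Lemma Hh_rho n i : Hh (rho n i).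
Proof.
rewrite /Hh /rho (_ : _ - _ = n%:R - i.+1%:R); first by rewrite rpredB ?natr_int.
by rewrite mul1r addrK.
Qed.

Lemma Hh_add m y : m \is a Num.int -> Hh y -> Hh (m + y).
Proof. by move=> hm hy; rewrite /Hh -addrA rpredD. Qed.

Lemma Hh_sign (s : bool) y : Hh y -> Hh ((-1) ^+ s * y).
Proof.
case: s => hy; last by rewrite expr0 mul1r.
rewrite expr1 mulN1r /Hh (_ : - y - 2%:R^-1 = - (y - 2%:R^-1) - 1).
  by rewrite rpredB ?rpredN ?int_num1.
rewrite (_ : 1 = 2%:R^-1 + 2%:R^-1 :> rat); first by ring.
by rewrite -mulr2n -mulr_natr.
Qed.

Lemma Hh2 y : Hh y -> (2%:R * y) \is a Num.int.
Proof.
move=> hy; rewrite (_ : 2%:R * y = 2%:R * (y - 2%:R^-1) + 1).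
  by rewrite rpredD ?rpredM ?natr_int ?int_num1.
by rewrite mulrBr mulfV ?subrK.
Qed.

Lemma Hhsub y z : Hh y -> Hh z -> (y - z) \is a Num.int.
Proof.
move=> hy hz; rewrite (_ : y - z = (y - 2%:R^-1) - (z - 2%:R^-1)); first exact: rpredB.
by ring.
Qed.

Lemma act_norm n (g : signed_perm n) (v : qvec n) :
  \sum_i Defs.act g v i ^+ 2 = \sum_i v i ^+ 2.
Proof.
rewrite [RHS](reindex_inj (@perm_inj _ g.1)); apply: eq_bigr => i _.
by rewrite /Defs.act exprMn sqrr_sign mul1r.
Qed.

Lemma Gsum_prod n N : (0 < N)%N ->
  Gsum n N = \prod_(i < n) \sum_(x < N) qpow N (x%:R * (x%:R + 2%:R * rho n i)).
Proof.
move=> N0; rewrite bigA_distr_bigA /Gsum; apply: eq_bigr => l _.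
rewrite -qpow_sum //.
  by move=> i; rewrite !rpredM ?rpredD ?natr_int ?Hh2 ?Hh_rho.
Qed.

Lemma Gsum_neq0 n N : (N %% 4 = 2)%N -> Gsum n N != 0.
Proof.
move=> hN; have N0 : (0 < N)%N by rewrite lt0n; apply/eqP => e; rewrite e in hN.
rewrite Gsum_prod //; apply/prodf_neq0 => i _.
have e : 2%:R * rho n i = (2 * (n - i.+1) + 1)%N%:R.
  rewrite /rho natrD natrM natrB ?ltn_ord // mul1r mulrDr mulfV //; ring.
by rewrite e gauss_neq0 // oddD oddM.
Qed.

Lemma main_g n N (HN : (N %% 4 = 2)%N) (g : signed_perm n) (mu : 'I_n -> int) :
  \sum_(l : {ffun 'I_n -> 'I_N}) xcoef n N (repr_mod l)
     * qpow N (dot (repr_mod l) (vadd (repr_mod l) (vscale 2%:R (rho n))))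
     * qpow N (2%:R * dot (vadd (repr_mod l) (rho n)) (Defs.act g (vadd (ivec mu) (rho n))))
  = qpow N (2%:R * dot (rho n) (Defs.act g (vadd (ivec mu) (rho n))))
    * qpow N (- dot (ivec mu) (vadd (ivec mu) (vscale 2%:R (rho n)))).
Proof.
have N0 : (0 < N)%N by rewrite lt0n; apply/eqP => e; rewrite e in HN.
pose nu := Defs.act g (vadd (ivec mu) (rho n)).
have Hnu : forall i, Hh (nu i).
  move=> i; apply: Hh_sign; apply: Hh_add; [exact: intr_int | exact: Hh_rho].
have H2nu : forall i, (2%:R * nu i) \is a Num.int by move=> i; apply: Hh2.
have H2rho : forall i, (2%:R * rho n i) \is a Num.int by move=> i; apply: Hh2; apply: Hh_rho.
pose e i (x : 'I_N) := (x : nat)%:R ^+ 2 + 2%:R * (x : nat)%:R * nu i + 2%:R * rho n i * nu i.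
have step1 : forall l : {ffun 'I_n -> 'I_N},
   xcoef n N (repr_mod l)
     * qpow N (dot (repr_mod l) (vadd (repr_mod l) (vscale 2%:R (rho n))))
     * qpow N (2%:R * dot (vadd (repr_mod l) (rho n)) nu)
   = cconst n N * \prod_i qpow N (e i (l i)).
  move=> l; rewrite /xcoef -!mulrA; congr (_ * _); rewrite mulrA.
  rewrite -(@qpowD N N0); last first.
    rewrite mulrN rpredN /dot mulr_sumr rpred_sum // => i _.
    by rewrite /vscale /repr_mod mulrCA rpredM ?natr_int // rpredM ?natr_int ?H2rho.
  rewrite -(@qpowD N N0); last first.
    rewrite /dot -sumrN -big_split mulr_sumr rpred_sum //= => i _.
    rewrite /vscale /vadd /repr_mod.
    rewrite (_ : _ * _ = 4%:R * (l i : nat)%:R ^+ 2) ?int4sq ?rpredM ?natr_int //; ring.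
  rewrite -(@qpow_sum N N0); last first.
    move=> i.
    have i2 : forall m : nat, (2%:R * m%:R : rat) \is a Num.int by move=> m; rewrite rpredM ?natr_int.
    have c2 : (2%:R : rat) \is a Num.int by exact: natr_int.
    rewrite (_ : 4%:R * e i (l i) = 4%:R * ((l i : nat)%:R ^+ 2) + (2%:R * (l i : nat)%:R) * (2%:R * (2%:R * nu i))
       + 2%:R * (2%:R * rho n i) * (2%:R * nu i)); last by rewrite /e; ring.
    apply: rpredD; first apply: rpredD.
    - exact: int4sq (i2 _).
    - exact: rpredM (i2 _) (rpredM c2 (H2nu i)).
    - exact: rpredM (rpredM c2 (H2rho i)) (H2nu i).
  congr qpow; rewrite /dot /e /vadd /vscale /repr_mod.
  rewrite mulr_sumr -sumrN -!big_split /=; apply: eq_bigr => i _; ring.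
transitivity (\sum_(l : {ffun 'I_n -> 'I_N}) cconst n N * \prod_i qpow N (e i (l i))).
  by apply: eq_bigr => l _; exact: step1.
rewrite -mulr_sumr -(bigA_distr_bigA (fun i x => qpow N (e i x))) /=.
rewrite /e.
under eq_bigr => i _ do rewrite (@shift1 N N0 (nu i) (rho n i) _ (H2nu i) (@Hhsub _ _ (Hnu i) (Hh_rho n i))).
rewrite big_split /=.
have GP : Gsum n N = \prod_i \sum_(x < N) qpow N ((x : nat)%:R ^+ 2 + 2%:R * (x : nat)%:R * rho n i).
  rewrite Gsum_prod //; apply: eq_bigr => i _; apply: eq_bigr => x _; congr qpow; ring.
rewrite -GP -(@qpow_sum N N0); last first.
  move=> i.
  rewrite (_ : 4%:R * _ = 2%:R * (2%:R * rho n i) * (2%:R * nu i) - (2%:R * nu i) ^+ 2 + (2%:R * rho n i) ^+ 2); last by ring.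
  apply: rpredD; first apply: rpredB.
  - exact: rpredM (rpredM (@natr_int _ 2) (H2rho i)) (H2nu i).
  - exact: rpredX _ (H2nu i).
  - exact: rpredX _ (H2rho i).
rewrite mulrCA /cconst mulVf ?Gsum_neq0 // mulr1.
rewrite -(@qpowD N N0); last first.
  rewrite /dot mulr_sumr mulr_sumr rpred_sum // => i _.
  rewrite -/nu (_ : 4%:R * (2%:R * (rho n i * nu i)) = 2%:R * (2%:R * rho n i) * (2%:R * nu i)); last by ring.
  exact: rpredM (rpredM (@natr_int _ 2) (H2rho i)) (H2nu i).
congr qpow.
have -> : \sum_i (2%:R * rho n i * nu i - nu i ^+ 2 + rho n i ^+ 2)
   = \sum_i (2%:R * rho n i * nu i + rho n i ^+ 2) - \sum_i nu i ^+ 2.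
  by rewrite -sumrB; apply: eq_bigr => i _; ring.
rewrite /nu act_norm /dot mulr_sumr -sumrN -sumrB -big_split /=.
by apply: eq_bigr => i _; rewrite /vadd /ivec /vscale; ring.
Qed.

Theorem mainTheorem7 (n N : nat) (HN : (N %% 4 = 2)%N)
    (eps' : signed_perm n -> algC)
    (Heps : forall g, eps' g = 1 \/ eps' g = -1)
    (mu : 'I_n -> int) :
  Gsum n N != 0 /\
  \sum_(l : {ffun 'I_n -> 'I_N})
     xcoef n N (repr_mod l)
     * qpow N (dot (repr_mod l) (vadd (repr_mod l) (vscale 2%:R (rho n))))
     * Sprime n N eps' (repr_mod l) (ivec mu)
  = Qmu n N eps' (ivec mu)
    * qpow N (- dot (ivec mu) (vadd (ivec mu) (vscale 2%:R (rho n)))).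
Proof.
split; first exact: Gsum_neq0.
rewrite /Sprime /Qmu.
under eq_bigr => l _ do rewrite mulr_sumr.
rewrite exchange_big mulr_suml /=; apply: eq_bigr => g _.
under eq_bigr => l _ do rewrite mulrCA.
by rewrite -mulr_sumr main_g // mulrA.
Qed.
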